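(* There exists no structure $\mathbf{E}=(\{0,1\},\mathcal R)$ (a structure with universe $\{0,1\}$ in some countable first-order language) such that $(\mathbf{S}_0,\mathbf{E})$ is a dual pair.
   Context: $\mathbf{S}_0=(\{0,1\},\beta)$ where $\beta$ is the ternary relation with $\beta(x,y,z)$ iff ($x=z=1\implies y=1$). A structure is $\mathbf{D}$-separated if it embeds (injective homomorphism preserving and reflecting all relations) into a power of $\mathbf{D}$. Semi-dual pair: for finite models $\mathbf{D}$, $\mathbf{E}$ of countable languages $\mathcal L,\mathcal R$ with the same universe, $(\mathbf{D},\mathbf{E})$ is a semi-dual pair if for every finite $\mathbf{D}$-separated $\mathbf{X}$ with universe $X$: (S1) the set $\hom(\mathbf{X},\mathbf{D})$ of homomorphisms is a substructure of $\mathbf{E}^X$; (S2) for every homomorphism $\phi$ from $\hom(\mathbf{X},\mathbf{D})$ (with the $\mathcal R$-structure induced from $\mathbf{E}^X$) into $\mathbf{E}$ there is $x\in X$ with $\phi(f)=f(x)$ for all $f\in\hom(\mathbf{X},\mathbf{D})$. $(\mathbf{D},\mathbf{E})$ is a dual pair if both $(\mathbf{D},\mathbf{E})$ and $(\mathbf{E},\mathbf{D})$ are semi-dual pairs. *)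

(* Defs.v *)
From mathcomp Require Import all_boot.
Set Implicit Arguments. Unset Strict Implicit. Unset Printing Implicit Defensive.

(* A countable first-order language: countably many relation symbols and
   function symbols (constants = 0-ary function symbols), with arities. *)
Record language := Language {
  rsym : countType;
  fsym : countType;
  rar : rsym -> nat;
  far : fsym -> nat }.

Record structure (L : language) (A : Type) := Structure {
  rel : forall i : rsym L, ('I_(rar i) -> A) -> Prop;
  op  : forall j : fsym L, ('I_(far j) -> A) -> A }.

Section Defs.
Variable L : language.

Definition is_hom (A B : Type) (SA : structure L A) (SB : structure L B)
  (h : A -> B) : Prop :=
  (forall i (t : 'I_(rar i) -> A), rel SA t -> rel SB (h \o t)) /\
  (forall j (t : 'I_(far j) -> A), h (op SA t) = op SB (h \o t)).

Definition is_embedding (A B : Type) (SA : structure L A) (SB : structure L B)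
  (h : A -> B) : Prop :=
  injective h /\ is_hom SA SB h /\
  (forall i (t : 'I_(rar i) -> A), rel SB (h \o t) -> rel SA t).

Definition power (A : Type) (SA : structure L A) (K : Type) : structure L (K -> A) :=
  @Structure L (K -> A)
    (fun i t => forall k, rel SA (fun n => t n k))
    (fun j t => fun k => op SA (fun n => t n k)).

Definition separated (A X : Type) (D : structure L A) (SX : structure L X) : Prop :=
  exists (K : Type) (h : X -> (K -> A)), is_embedding SX (power D K) h.

End Defs.

Definition semi_dual_pair (L R : language) (A : Type)
  (D : structure L A) (E : structure R A) : Prop :=
  forall (X : finType) (SX : structure L X), 0 < #|X| -> separated D SX ->
  (* (S1) hom(X,D) is closed under the operations of E^X (hence a substructure) *)
  (forall j (t : 'I_(far j) -> (X -> A)),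
     (forall n, is_hom SX D (t n)) -> is_hom SX D (op (power E X) t)) /\
  (* (S2) every homomorphism hom(X,D) -> E is an evaluation *)
  (forall phi : {f : X -> A | is_hom SX D f} -> A,
     ((forall i (t : 'I_(rar i) -> {f : X -> A | is_hom SX D f}),
         rel (power E X) (fun n => sval (t n)) -> rel E (phi \o t)) /\
      (forall j (t : 'I_(far j) -> {f : X -> A | is_hom SX D f})
              (g : {f : X -> A | is_hom SX D f}),
         sval g = op (power E X) (fun n => sval (t n)) ->
         phi g = op E (phi \o t))) ->
     exists x : X, forall f : {f : X -> A | is_hom SX D f}, phi f = sval f x).

Definition dual_pair (L R : language) (A : Type)
  (D : structure L A) (E : structure R A) : Prop :=
  semi_dual_pair D E /\ semi_dual_pair E D.

Definition L0 : language :=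
  @Language (unit : countType) (void : countType) (fun _ => 3) (fun v => match v with end).

Definition beta (t : 'I_3 -> bool) : Prop :=
  t ord0 && t (inord 2) -> t (inord 1).

Definition S0 : structure L0 bool :=
  @Structure L0 bool (fun _ t => beta t) (fun v => match v with end).

(* Main.v *)
Require Import Defs.
From mathcomp Require Import all_boot.
From Stdlib Require Import FunctionalExtensionality Classical.
Set Implicit Arguments. Unset Strict Implicit. Unset Printing Implicit Defensive.

Definition i0 : 'I_4 := @Ordinal 4 0 isT.
Definition i1 : 'I_4 := @Ordinal 4 1 isT.
Definition i2 : 'I_4 := @Ordinal 4 2 isT.
Definition i3 : 'I_4 := @Ordinal 4 3 isT.

Definition mk (p q r s : bool) : {ffun 'I_4 -> bool} :=
  [ffun k : 'I_4 => nth false [:: p; q; r; s] k].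

Lemma mkE (y : {ffun 'I_4 -> bool}) : y = mk (y i0) (y i1) (y i2) (y i3).
Proof.
apply/ffunP => -[[|[|[|[|k]]]] Hk]; rewrite ffunE /=; try (congr (y _); exact: val_inj).
by [].
Qed.

Lemma ord4 (m : 'I_4) : [\/ m = i0, m = i1, m = i2 | m = i3].
Proof.
case: m => [[|[|[|[|k]]]] Hk]; [constructor 1|constructor 2|constructor 3|constructor 4|by []];
  exact: val_inj.
Qed.

Definition W (y : {ffun 'I_4 -> bool}) : bool :=
  ~~ (y i0 && y i1 && y i2 && ~~ y i3) && ~~ (~~ y i0 && ~~ y i1 && ~~ y i2 && y i3).
Definition Z (y : {ffun 'I_4 -> bool}) : bool := ~~ (y i0 && y i1 && y i2 && ~~ y i3).

Lemma comb (G : bool -> bool -> bool -> bool -> bool) (a b c : nat) :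
  a < 4 -> b < 4 -> c < 4 ->
  (forall p q r, G p q r p = nth false [:: p; q; r; p] a) ->
  (forall p q r, G p q r q = nth false [:: p; q; r; q] b) ->
  (forall p q r, G p q r r = nth false [:: p; q; r; r] c) ->
  exists2 j, j < 4 & forall p q r s, ~~ (p && q && r && ~~ s) -> ~~ (~~ p && ~~ q && ~~ r && s) ->
     G p q r s = nth false [:: p; q; r; s] j.
Proof.
move=> ha hb hc HA HB HC.
have key : forall j, j < 4 ->
  (forall p q r, nth false [:: p; q; r; p] a = nth false [:: p; q; r; p] j) ->
  (forall p q r, nth false [:: p; q; r; q] b = nth false [:: p; q; r; q] j) ->
  (forall p q r, nth false [:: p; q; r; r] c = nth false [:: p; q; r; r] j) ->
  exists2 j, j < 4 & forall p q r s, ~~ (p && q && r && ~~ s) -> ~~ (~~ p && ~~ q && ~~ r && s) ->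
     G p q r s = nth false [:: p; q; r; s] j.
  move=> j hj EA EB EC; exists j => // p q r s.
  case: p; case: q; case: r; case: s => //= _ _;
   first [ rewrite HA EA // | rewrite HB EB // | rewrite HC EC // ].
have X1 := HA true true false; have X2 := HB true true false.
have X3 := HA true false true; have X4 := HC true false true.
have X5 := HB false true true; have X6 := HC false true true.
have X7 := HA false false true; have X8 := HB false false true.
have X9 := HA false true false; have X10 := HC false true false.
have X11 := HB true false false; have X12 := HC true false false.
clear HA HB HC; move: a b c ha hb hc key X1 X2 X3 X4 X5 X6 X7 X8 X9 X10 X11 X12.
case=> [|[|[|[|a]]]]; case=> [|[|[|[|b]]]]; case=> [|[|[|[|c]]]] => //= _ _ _ key;
  move=> X1 X2 X3 X4 X5 X6 X7 X8 X9 X10 X11 X12;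
  try congruence;
  first [ by apply: (key 0) => //; move=> [] [] [] | by apply: (key 1) => //; move=> [] [] [] | by apply: (key 2) => //; move=> [] [] [] | by apply: (key 3) => //; move=> [] [] []].
Qed.

Definition closed_under (R : language) (E : structure R bool) (P : pred {ffun 'I_4 -> bool}) :=
  forall j (t : 'I_(far j) -> {ffun 'I_4 -> bool}), (forall n, P (t n)) ->
    P [ffun k => Defs.op E (fun n => t n k)].

Definition SY (R : language) (E : structure R bool) (P : pred {ffun 'I_4 -> bool})
  (cl : closed_under E P) : structure R {y | P y} :=
  @Structure R {y | P y} (fun i t => forall k, Defs.rel E (fun n => val (t n) k))
    (fun j t => exist _ [ffun k => Defs.op E (fun n => val (t n) k)]
                  (cl j (fun n => val (t n)) (fun n => valP (t n)))).

Definition SX4 : structure L0 'I_4 :=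
  @Structure L0 'I_4 (fun (_ : unit) (t : 'I_3 -> 'I_4) =>
      t (inord 1) = t ord0 \/ t (inord 1) = t (inord 2)) (fun v => match v with end).

Lemma allhom4 (f : 'I_4 -> bool) : is_hom SX4 S0 f.
Proof.
split; last by case.
move=> i t /= [e|e]; rewrite /beta /= e; by case/andP.
Qed.

Lemma sep4 : separated S0 SX4.
Proof.
exists ('I_4 -> bool), (fun x f => f x); split; [|split; [split|]].
- move=> x y /(congr1 (fun h => h (fun z => z == x))) /=; rewrite eqxx.
  by move/esym/eqP.
- move=> i t /= [e|e] f; rewrite /beta /= e; by case/andP.
- by case.
- move=> i t /= H.
  have := H (fun z => (z == t ord0) || (z == t (inord 2))).
  rewrite /beta /= !eqxx orbT /= => /(_ isT) /orP [] /eqP; by [left|right].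
Qed.

Definition sg (m k : 'I_4) : 'I_4 := if k == i3 then m else k.

Lemma Wsg (m : 'I_4) (Hm : m != i3) (f : 'I_4 -> bool) : W [ffun k => f (sg m k)].
Proof.
rewrite /W !ffunE /sg /=.
by case: (ord4 m) Hm => -> //= _; case: (f i0); case: (f i1); case: (f i2).
Qed.

Lemma sig_proj (R : language) (E : structure R bool) (d1 : semi_dual_pair S0 E)
  (P : pred {ffun 'I_4 -> bool}) (cl : closed_under E P) (WP : forall y, W y -> P y)
  (g : {y | P y} -> bool) (hg : is_hom (SY cl) E g) (m : 'I_4) (Hm : m != i3) :
  exists x : 'I_4, forall f : 'I_4 -> bool,
    g (exist _ [ffun k => f (sg m k)] (WP _ (Wsg Hm f))) = f x.
Proof.
have [_ S2] := d1 _ SX4 ltac:(by rewrite card_ord) sep4.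
pose phi (f : {f : 'I_4 -> bool | is_hom SX4 S0 f}) :=
  g (exist _ [ffun k => sval f (sg m k)] (WP _ (Wsg Hm (sval f)))).
have [|x Hx] := S2 phi.
  split.
  - move=> i t Ht; rewrite /phi.
    have := hg.1 i (fun n => exist _ [ffun k => sval (t n) (sg m k)] (WP _ (Wsg Hm (sval (t n))))).
    apply => k /=.
    have -> : (fun n => [ffun k0 => sval (t n) (sg m k0)] k) = (fun n => sval (t n) (sg m k)).
      by apply: functional_extensionality => n; rewrite ffunE.
    exact: Ht.
  - move=> j t gg Hgg; rewrite /phi.
    rewrite -(hg.2 j (fun n => exist _ [ffun k => sval (t n) (sg m k)] (WP _ (Wsg Hm (sval (t n)))))).
    congr g; apply: val_inj => /=; apply/ffunP => k; rewrite !ffunE Hgg /=.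
    congr (Defs.op E); apply: functional_extensionality => n; by rewrite ffunE.
exists x => f; exact: (Hx (exist _ f (allhom4 f))).
Qed.

Lemma tri_beta (T : Type) (u v w : T) (P : T -> bool) :
  beta (fun q : 'I_3 => P (nth u [:: u; v; w] q)) = (P u && P w -> P v).
Proof. by rewrite /beta /= !inordK. Qed.

Lemma poly (R : language) (E : structure R bool) (d1 : semi_dual_pair S0 E) j
  (u v w : 'I_(far j) -> bool) :
  (forall m, u m && w m -> v m) -> Defs.op E u && Defs.op E w -> Defs.op E v.
Proof.
move=> Huvw.
pose X := {ffun 'I_(far j) -> bool}.
pose SXn : structure L0 X := @Structure L0 X
  (fun (_ : unit) (t3 : 'I_3 -> X) => forall m, beta (fun i => t3 i m))
  (fun v => match v with end).
have sepn : separated S0 SXn.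
  exists 'I_(far j), (fun x m => x m); split; [|split; [split|]].
  - move=> x y e; apply/ffunP => k; exact: (congr1 (fun h => h k) e).
  - by move=> i t /=.
  - by case.
  - by move=> i t /=.
have [x _] : exists x : X, True by exists [ffun => false].
have [S1 _] := d1 _ SXn ltac:(by apply/card_gt0P; exists x) sepn.
have := S1 j (fun i (x : X) => x i).
case.
  move=> n; split; last by case.
  by move=> i t /= H; exact: H.
move=> Hr _.
pose t3 := fun q : 'I_3 => nth [ffun k => u k] [:: [ffun k => u k]; [ffun k => v k]; [ffun k => w k]] q.
have := Hr tt t3.
have H1 : @Defs.rel _ _ SXn tt t3.
  move=> m; rewrite /t3.
  have := tri_beta [ffun k => u k] [ffun k => v k] [ffun k => w k] (fun z : X => z m).
  move=> /= ->; rewrite !ffunE; exact: Huvw.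
move=> /(_ H1) /=.
have := tri_beta [ffun k => u k] [ffun k => v k] [ffun k => w k]
   (fun z : X => Defs.op E (fun n => z n)).
rewrite /t3 /= => ->.
have E1 : forall f : 'I_(far j) -> bool, (fun n => [ffun k => f k] n) = f.
  by move=> f; apply: functional_extensionality => n; rewrite ffunE.
by rewrite !E1.
Qed.

Lemma Zclosed (R : language) (E : structure R bool) (d1 : semi_dual_pair S0 E) :
  closed_under E Z.
Proof.
move=> j t Ht; rewrite /Z !ffunE.
set a := fun k n => t n k.
have h01 := @poly R E d1 j (a i0) (fun n => a i0 n && a i1 n) (a i1) (fun m H => H).
have h23 := @poly R E d1 j (fun n => a i0 n && a i1 n) (a i3) (a i2).
apply/negP => /andP [/andP [/andP [A0 A1] A2] A3].
move/negP: A3; apply.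
apply: h23.
  move=> m /andP [/andP [B0 B1] B2]; have := Ht m; rewrite /Z; move: B0 B1 B2; rewrite /a /= => -> -> -> /=.
  by case: (t m i3).
by rewrite A2 andbT h01 // A0 A1.
Qed.

Lemma projhom (R : language) (E : structure R bool) (d1 : semi_dual_pair S0 E)
  (P : pred {ffun 'I_4 -> bool}) (cl : closed_under E P) (WP : forall y, W y -> P y)
  (g : {y | P y} -> bool) (hg : is_hom (SY cl) E g) :
  exists j : 'I_4, forall y : {y | P y}, W (val y) -> g y = val y j.
Proof.
pose Gf y := if insub y is Some u then g u else false.
have GfE : forall u, Gf (val u) = g u by move=> u; rewrite /Gf valK.
have key : forall m : 'I_4, m != i3 -> exists x : 'I_4, forall p q r,
    Gf (mk p q r (nth false [:: p; q; r] m)) = nth false [:: p; q; r; nth false [:: p; q; r] m] x.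
  move=> m Hm; have [x Hx] := sig_proj d1 WP hg Hm; exists x => p q r.
  have := Hx (fun k => nth false [:: p; q; r; nth false [:: p; q; r] m] k).
  set u := exist _ _ _.
  have -> : mk p q r (nth false [:: p; q; r] m) = val u.
    rewrite /u /=; apply/ffunP => k; rewrite !ffunE /sg.
    by move: (Hm); case: (ord4 m) => -> // _; case: (ord4 k) => ->.
  by rewrite GfE.
have [a Ha] := key i0 isT.
have [b Hb] := key i1 isT.
have [c Hc] := key i2 isT.
have [j hj HG] := @comb (fun p q r s => Gf (mk p q r s)) a b c (ltn_ord a) (ltn_ord b) (ltn_ord c)
  Ha Hb Hc.
exists (Ordinal hj) => y Wy.
rewrite -GfE (mkE (val y)); case/andP: Wy => W1 W2; rewrite HG //.
by rewrite ffunE.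
Qed.

Lemma projishom (R : language) (E : structure R bool)
  (P : pred {ffun 'I_4 -> bool}) (cl : closed_under E P) (k : 'I_4) :
  is_hom (SY cl) E (fun y => val y k).
Proof.
split.
- move=> i t H; exact: H.
- by move=> j t /=; rewrite ffunE.
Qed.

Lemma Wdelta (j0 j2 : 'I_4) : j0 != i3 -> j2 != i3 ->
  W [ffun k => (k == j0) || (k == j2)].
Proof.
rewrite /W !ffunE.
by case: (ord4 j0) => -> // _; case: (ord4 j2) => -> // _.
Qed.

Lemma mainP (R : language) (E : structure R bool) (d1 : semi_dual_pair S0 E)
  (d2 : semi_dual_pair E S0)
  (P : pred {ffun 'I_4 -> bool}) (cl : closed_under E P) (WP : forall y, W y -> P y)
  (PZ : forall y, P y -> Z y)
  (Hext : forall g : {y | P y} -> bool, is_hom (SY cl) E g -> forall j : 'I_4,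
     (forall y : {y | P y}, W (val y) -> g y = val y j) -> forall y, g y = val y j) :
  False.
Proof.
have ph : forall g : {y | P y} -> bool, is_hom (SY cl) E g ->
    exists j : 'I_4, forall y, g y = val y j.
  move=> g hg; have [j Hj] := projhom d1 WP hg; exists j; exact: Hext hg j Hj.
pose y0 : {y | P y} := exist _ (mk false false false false) (WP (mk false false false false) ltac:(by rewrite /W !ffunE)).
have sepY : separated E (SY cl).
  exists 'I_4, (fun (y : {y | P y}) (k : 'I_4) => val y k : bool); split; [|split; [split|]].
  - move=> x y e; apply: val_inj; apply/ffunP => k; exact: (congr1 (fun h => h k) e).
  - by move=> i t /=.
  - move=> j t /=; apply: functional_extensionality => k; by rewrite ffunE.
  - by move=> i t /=.
have [_ S2] := d2 _ (SY cl) ltac:(by apply/card_gt0P; exists y0) sepY.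
pose phi (gg : {g : {y | P y} -> bool | is_hom (SY cl) E g}) :=
  ~~ [forall y, sval gg y == val y i3].
have [|y Hy] := S2 phi.
  split; last by case.
  move=> i t Ht; rewrite /= /beta /=.
  case/andP => H0 H2; apply/negP => /forallP H1.
  have [j0 E0] := ph _ (svalP (t ord0)).
  have [j2 E2] := ph _ (svalP (t (inord 2))).
  have N0 : j0 != i3.
    apply: contra H0 => /eqP e; apply/forallP => z; by rewrite E0 e.
  have N2 : j2 != i3.
    apply: contra H2 => /eqP e; apply/forallP => z; by rewrite E2 e.
  pose z : {y | P y} := exist _ [ffun k => (k == j0) || (k == j2)] (WP _ (Wdelta N0 N2)).
  have := Ht z; rewrite /= /beta /= E0 E2 !ffunE !eqxx orbT /=.
  move/(_ isT); have := H1 z; move/eqP => ->; rewrite ffunE.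
  by rewrite !(eq_sym i3) (negbTE N0) (negbTE N2).
have Hk : forall k : 'I_4, k != i3 -> val y k.
  move=> k Nk; have := Hy (exist _ _ (projishom cl k)); rewrite /phi /= => <-.
  apply/negP => /forallP /(_ (exist _ [ffun k' => (k' == k) || (k' == k)] (WP _ (Wdelta Nk Nk)))).
  by rewrite /= !ffunE eqxx !(eq_sym i3) (negbTE Nk).
have H3 : ~~ val y i3.
  have := Hy (exist _ _ (projishom cl i3)); rewrite /phi /= => <-.
  by rewrite negbK; apply/forallP.
have := PZ _ (valP y); rewrite /Z (Hk i0 isT) (Hk i1 isT) (Hk i2 isT) H3.
by [].
Qed.

Lemma WZ y : W y -> Z y.
Proof. by case/andP. Qed.

Lemma notW_uniq (y1 y2 : {ffun 'I_4 -> bool}) :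
  Z y1 -> ~~ W y1 -> Z y2 -> ~~ W y2 -> y1 = y2.
Proof.
rewrite /Z /W => A B C D; rewrite (mkE y1) (mkE y2); move: A B C D.
by case: (y1 i0); case: (y1 i1); case: (y1 i2); case: (y1 i3);
   case: (y2 i0); case: (y2 i1); case: (y2 i2); case: (y2 i3).
Qed.

Theorem mainTheorem17 :
  forall (R : language) (E : structure R bool), ~ dual_pair S0 E.
Proof.
move=> R E [d1 d2].
case: (classic (closed_under E W)) => [clW|nclW].
- apply: (@mainP R E d1 d2 W clW (fun y h => h)).
  + exact: WZ.
  + move=> g hg j H y; exact: H _ (valP y).
- have [j [t [Ht Hr]]] : exists j (t : 'I_(far j) -> {ffun 'I_4 -> bool}),
      (forall n, W (t n)) /\ ~~ W [ffun k => Defs.op E (fun n => t n k)].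
    apply: NNPP => Hn; apply: nclW => j t Ht; apply/negPn/negP => Hw; apply: Hn.
    by exists j, t; split => //; apply/negP.
  have clZ := Zclosed d1.
  apply: (@mainP R E d1 d2 Z clZ); first exact: WZ; first by [].
  move=> g hg j0 H y.
  case Wy: (W (val y)); first exact: H.
  pose tt' n : {y | Z y} := exist _ (t n) (WZ (Ht n)).
  have ey : y = Defs.op (SY clZ) tt'.
    apply: val_inj => /=; apply: notW_uniq.
    - exact: valP y.
    - by rewrite Wy.
    - exact: clZ j t (fun n => WZ (Ht n)).
    - exact: Hr.
  rewrite ey (hg.2 j tt') /= ffunE; congr (Defs.op E).
  apply: functional_extensionality => n /=; exact: H (tt' n) (Ht n).
Qed.
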